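(* (a) For any finite $d$--regular graph $G$ there exists a sequence of graphs $(G_i)_{i\geq0}$ with $G_0=G$, $G_i$ a $2$-lift of $G_{i-1}$ for $i\geq1$, such that $(G_i)$ Benjamini--Schramm converges to the infinite $d$--regular tree $\mathbb{T}_d$. (b) For any finite $(a,b)$--biregular bipartite graph $G$ there exists a sequence of graphs $(G_i)_{i\geq0}$ with $G_0=G$, $G_i$ a $2$-lift of $G_{i-1}$ for $i\geq1$, such that $(G_i)$ Benjamini--Schramm converges to the infinite $(a,b)$--biregular tree $\mathbb{T}_{a,b}$.
   Context: A graph $H$ is a $2$-lift of $G$ if $V(H)=V(G)\times\{0,1\}$ and for every edge $(u,v)\in E(G)$ exactly one of: $((u,0),(v,0)),((u,1),(v,1))\in E(H)$, or $((u,0),(v,1)),((u,1),(v,0))\in E(H)$; non-edges of $G$ give no edges in $H$. An $(a,b)$--biregular bipartite graph has bipartition $(A,B)$ with all vertices of $A$ of degree $a$ and all of $B$ of degree $b$. A sequence of finite $d$--regular graphs $(G_i)$ Benjamini--Schramm converges to $\mathbb{T}_d$ if for every $r\geq1$ the proportion of vertices $v$ of $G_i$ whose radius-$r$ ball, as a rooted graph, is isomorphic to the radius-$r$ ball of $\mathbb{T}_d$ tends to $1$. A sequence of finite $(a,b)$--biregular bipartite graphs Benjamini--Schramm converges to $\mathbb{T}_{a,b}$ (the random rooted tree which is $\mathbb{T}_{a,b}$ rooted at a vertex of degree $b$ with probability $\frac{a}{a+b}$ and at a vertex of degree $a$ with probability $\frac{b}{a+b}$) if for every $r\geq1$ the proportion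 of vertices $v$ of $G_i$ whose radius-$r$ ball is isomorphic, as a rooted graph, to the radius-$r$ ball of $\mathbb{T}_{a,b}$ around a vertex of the same degree as $v$ tends to $1$. *)

(* Defs.v *)
From HB Require Import structures.
From mathcomp Require Import all_boot all_order all_algebra.
From mathcomp Require Import boolp.
Set Implicit Arguments. Unset Strict Implicit. Unset Printing Implicit Defensive.
Import Order.TTheory GRing.Theory Num.Theory.

Definition simple_graph (T : finType) (e : rel T) : Prop :=
  symmetric e /\ irreflexive e.

Definition deg (T : finType) (e : rel T) (v : T) : nat := #|[set w | e v w]|.

Definition regular (T : finType) (e : rel T) (d : nat) : Prop :=
  forall v, deg e v = d.

Definition biregular_bipartite (T : finType) (e : rel T) (a b : nat) : Prop :=
  exists A : {set T},
    (forall u v, e u v -> (u \in A) != (v \in A)) /\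
    (forall v, v \in A -> deg e v = a) /\
    (forall v, v \notin A -> deg e v = b).

(* 2-lift: V(H) = V(G) x {0,1}; over each edge (u,v) of G, H contains exactly
   the "parallel" pair ((u,0),(v,0)),((u,1),(v,1)) or exactly the "crossed"
   pair ((u,0),(v,1)),((u,1),(v,0)); non-edges of G give no edges of H. *)
Definition is_2lift (T : finType) (e : rel T) (h : rel (T * bool)) : Prop :=
  simple_graph h /\
  forall u v : T,
    if e u v then
      (forall x y : bool, h (u, x) (v, y) = (x == y)) \/
      (forall x y : bool, h (u, x) (v, y) = (x != y))
    else forall x y : bool, h (u, x) (v, y) = false.

Fixpoint liftT (T : finType) (n : nat) : finType :=
  match n with
  | 0 => T
  | n.+1 => (liftT T n * bool)%type
  end.

Fixpoint ball (T : finType) (e : rel T) (r : nat) (v : T) : {set T} :=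
  match r with
  | 0 => [set v]
  | r.+1 => ball e r v :|: \bigcup_(u in ball e r v) [set w | e u w]
  end.

(* Spherically symmetric rooted trees: a vertex at depth k has c k children.
   Vertices are words s : seq nat with s_k < c k; the root is [::], and the
   edges are between s and rcons s i. *)
Definition stree_vertex (c : nat -> nat) (s : seq nat) : bool :=
  all (fun k => nth 0 s k < c k) (iota 0 (size s)).

Definition stree_adj (s t : seq nat) : bool :=
  ((size t == (size s).+1) && (s == take (size s) t)) ||
  ((size s == (size t).+1) && (t == take (size t) s)).

Definition stree_ball (c : nat -> nat) (r : nat) (s : seq nat) : bool :=
  (size s <= r) && stree_vertex c s.

Definition ball_iso_tree (T : finType) (e : rel T) (r : nat) (v : T)
    (c : nat -> nat) : Prop :=
  exists f : T -> seq nat,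
    [/\ f v = [::],
        {in ball e r v &, injective f},
        (forall x, x \in ball e r v -> stree_ball c r (f x)),
        (forall s, stree_ball c r s -> exists2 x, x \in ball e r v & f x = s)
      & {in ball e r v &, forall x y, e x y = stree_adj (f x) (f y)}].

Definition Td_children (d : nat) (k : nat) : nat := if k == 0 then d else d.-1.

(* Infinite (a,b)-biregular tree T_{a,b} rooted at a vertex of degree a
   (children counts a, b-1, a-1, b-1, ...); swap a and b for the other root. *)
Definition Tab_children (a b : nat) (k : nat) : nat :=
  if k == 0 then a else if odd k then b.-1 else a.-1.

Local Open Scope ring_scope.

Definition proportion (T : finType) (P : pred T) : rat :=
  #|[set v | P v]|%:R / #|T|%:R.

Definition tends_to_one (p : nat -> rat) : Prop :=
  forall eps : rat, 0 < eps -> exists N : nat, forall i : nat,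
    (N <= i)%N -> `|p i - 1| < eps.

Definition BS_conv_Td (V : nat -> finType) (G : forall i, rel (V i))
    (d : nat) : Prop :=
  forall r : nat, (1 <= r)%N ->
    tends_to_one (fun i =>
      proportion (fun v : V i => `[< ball_iso_tree (G i) r v (Td_children d) >])).

Definition BS_conv_Tab (V : nat -> finType) (G : forall i, rel (V i))
    (a b : nat) : Prop :=
  forall r : nat, (1 <= r)%N ->
    tends_to_one (fun i =>
      proportion (fun v : V i =>
        `[< (deg (G i) v = a /\ ball_iso_tree (G i) r v (Tab_children a b)) \/
            (deg (G i) v = b /\ ball_iso_tree (G i) r v (Tab_children b a)) >])).

(* Main.v *)
Require Import Defs.
From HB Require Import structures.
From mathcomp Require Import all_boot all_order all_algebra.
From mathcomp Require Import boolp.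
From mathcomp Require Import zify ring.
Set Implicit Arguments. Unset Strict Implicit. Unset Printing Implicit Defensive.
Section Tree.
Variables (V : finType) (g : rel V).
Hypotheses (gs : symmetric g) (gi : irreflexive g).
Variable v : V.

Definition walk (u : nat -> V) (k : nat) : Prop := forall i, i < k -> g (u i) (u i.+1).
Definition nback (u : nat -> V) (k : nat) : Prop := forall i, i.+2 <= k -> u i <> u i.+2.
Definition sa (u : nat -> V) (k : nat) : Prop :=
  forall i j, i <= k -> j <= k -> u i = u j -> i = j.

Definition ch (px : V * V) : seq V := enum [set y | g px.2 y & y != px.1].
Definition step (px : V * V) (i : nat) : V * V := (px.2, nth px.2 (ch px) i).
Definition st (s : seq nat) := foldl step (v, v) s.
Definition phi s := (st s).2.
Definition inrange (s : seq nat) : Prop :=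
  forall k, k < size s -> nth 0 s k < size (ch (st (take k s))).

Lemma st_rcons s i : st (rcons s i) = step (st s) i.
Proof. by rewrite /st foldl_rcons. Qed.

Lemma take_rcons_size (s : seq nat) i : take (size s) (rcons s i) = s.
Proof. by rewrite -cats1 take_size_cat. Qed.

Lemma inrange_rcons s i : inrange (rcons s i) <-> inrange s /\ i < size (ch (st s)).
Proof.
split.
- move=> H; split.
  + move=> k hk. have := H k; rewrite size_rcons nth_rcons hk -cats1 takel_cat; last exact: ltnW.
    by apply; apply: ltnW.
  + have := H (size s); rewrite size_rcons nth_rcons ltnn eqxx take_rcons_size; exact.
- case=> H1 H2 k; rewrite size_rcons ltnS leq_eqVlt => /orP [/eqP ->|hk].
  + by rewrite nth_rcons ltnn eqxx take_rcons_size.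
  + by rewrite nth_rcons hk -cats1 takel_cat; [apply: H1|apply: ltnW].
Qed.

Lemma inrange_nil : inrange [::].
Proof. by move=> k. Qed.

Lemma inrange_take s k : inrange s -> inrange (take k s).
Proof.
move=> H j; rewrite size_take => hj.
have [hjs hjk] : j < size s /\ j < k by move: hj; case: (ltnP k (size s)) => h1 h2; lia.
rewrite nth_take // take_takel; [exact: H|exact: ltnW].
Qed.

Lemma st_nil : st [::] = (v, v). Proof. by []. Qed.
Lemma st_fst_rcons s i : (st (rcons s i)).1 = phi s.
Proof. by rewrite st_rcons. Qed.
Lemma phi_rcons s i : phi (rcons s i) = nth (phi s) (ch (st s)) i.
Proof. by rewrite /phi st_rcons. Qed.
Lemma ch_mem px y : (y \in ch px) = g px.2 y && (y != px.1).
Proof. by rewrite /ch mem_enum inE. Qed.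
Lemma ch_uniq px : uniq (ch px). Proof. exact: enum_uniq. Qed.

Lemma phi_rcons_in s i : inrange (rcons s i) -> phi (rcons s i) \in ch (st s).
Proof. by case/inrange_rcons=> _ h; rewrite phi_rcons mem_nth. Qed.

Lemma st_edge s : inrange s -> s <> [::] -> g (st s).1 (st s).2.
Proof.
case/lastP: s => [//|s i] H _.
have := phi_rcons_in H; rewrite ch_mem => /andP [h _].
by rewrite st_fst_rcons.
Qed.

Lemma st_nb s i : inrange (rcons s i) -> phi (rcons s i) != (st s).1.
Proof. by move/phi_rcons_in; rewrite ch_mem => /andP [_ h]. Qed.

Definition ww s k := phi (take k s).

Lemma ww_rcons s k : k < size s -> ww s k.+1 = phi (rcons (take k s) (nth 0 s k)).
Proof. by move=> hk; rewrite /ww (take_nth 0 hk). Qed.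



Lemma ww_walk s : inrange s -> walk (ww s) (size s) /\ nback (ww s) (size s).
Proof.
move=> H; split.
- move=> i hi; rewrite (ww_rcons hi).
  have Hr : inrange (rcons (take i s) (nth 0 s i)) by rewrite -(take_nth 0 hi); exact: inrange_take.
  have := st_edge Hr; rewrite st_fst_rcons; apply.
  by case: (take i s).
- move=> i hi; rewrite (ww_rcons hi).
  have hi1 : i < size s by lia.
  have Hr : inrange (rcons (take i.+1 s) (nth 0 s i.+1)) by rewrite -(take_nth 0 hi); exact: inrange_take.
  have := st_nb Hr; rewrite (take_nth 0 hi1) st_fst_rcons => /eqP h1 h2.
  by apply: h1; rewrite -h2.
Qed.

Lemma ww0 s : ww s 0 = v. Proof. by rewrite /ww take0. Qed.
Lemma ww_size s : ww s (size s) = phi s. Proof. by rewrite /ww take_size. Qed.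

Definition goodv R := forall u k, k <= R -> u 0 = v -> walk u k -> nback u k -> sa u k.

Lemma ww_last s i : ww (rcons s i) (size s) = phi s.
Proof. by rewrite /ww take_rcons_size. Qed.

Lemma nil_phi_contra R t : goodv R -> inrange t -> size t <= R -> phi t = v -> t = [::].
Proof.
move=> G H ht hp; case: (ww_walk H) => hw hn.
have := G (ww t) (size t) ht (ww0 t) hw hn 0 (size t) (leq0n _) (leqnn _).
by rewrite ww0 ww_size hp => /(_ erefl) /esym /size0nil.
Qed.

Lemma phi_inj R : goodv R -> forall s t, inrange s -> inrange t ->
  size s + size t <= R -> phi s = phi t -> s = t.
Proof.
move=> G; elim/last_ind => [|s1 i IH] t Hs Ht hsz hp.
  by apply/esym; apply: (nil_phi_contra G Ht) => //; rewrite -hp.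
case/lastP: t Ht hsz hp => [|t1 j] Ht hsz hp.
  by apply: (nil_phi_contra G Hs) => //; move: hsz; rewrite addn0.
case/inrange_rcons: (Hs) => Hs1 hi; case/inrange_rcons: (Ht) => Ht1 hj.
move: hsz; rewrite !size_rcons => hsz.
case: (eqVneq (phi s1) (phi t1)) => hab.
- have e1 : s1 = t1 by apply: IH => //; lia.
  subst t1; congr rcons.
  move: hp; rewrite !phi_rcons => /eqP; rewrite nth_uniq //; first by move/eqP.
  exact: ch_uniq.
- exfalso.
  set a := size s1; set b := size t1.
  have [hws hns] := ww_walk Hs; have [hwt hnt] := ww_walk Ht.
  move: hws hns hwt hnt; rewrite !size_rcons -/a -/b => hws hns hwt hnt.
  have wsa : ww (rcons s1 i) a.+1 = phi (rcons s1 i) by rewrite -ww_size size_rcons.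
  have wtb : ww (rcons t1 j) b.+1 = phi (rcons t1 j) by rewrite -ww_size size_rcons.
  have wsa1 : ww (rcons s1 i) a = phi s1 by rewrite ww_last.
  have wtb1 : ww (rcons t1 j) b = phi t1 by rewrite ww_last.
  pose u k := if k < a.+1 then ww (rcons s1 i) k else ww (rcons t1 j) (a.+1 + b.+1 - k).
  have u0 : u 0 = v by rewrite /u /= ww0.
  have uN : u (a.+1 + b.+1) = v by rewrite /u ltnNge leq_addr /= subnn ww0.
  have hw : walk u (a.+1 + b.+1).
    move=> k hk; rewrite /u.
    case: (ltngtP k.+1 a.+1) => hk1.
    + apply: hws; lia.
    + rewrite gs; have -> : a.+1 + b.+1 - k = (a.+1 + b.+1 - k.+1).+1 by lia.
      apply: hwt; lia.
    + have ek : k = a by lia.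
      subst k; have -> : a.+1 + b.+1 - a.+1 = b.+1 by lia.
      rewrite wtb -hp -wsa; apply: hws; lia.
  have hn : nback u (a.+1 + b.+1).
    move=> k hk; rewrite /u.
    case: (ltngtP k.+2 a.+1) => hk1.
    + have -> : (k < a.+1) = true by lia.
      apply: hns; lia.
    + case: (ltnP k a.+1) => hk2.
      * have ek : k = a by lia.
        subst k; have -> : a.+1 + b.+1 - a.+2 = b by lia.
        by rewrite wsa1 wtb1; apply/eqP.
      * have -> : a.+1 + b.+1 - k = (a.+1 + b.+1 - k.+2).+2 by lia.
        move=> h; apply: (hnt (a.+1 + b.+1 - k.+2)); first lia.
        by rewrite h.
    + have -> : (k < a.+1) = true by lia.
      have -> : a.+1 + b.+1 - k.+2 = b.+1 by lia.
      rewrite wtb -hp -wsa -hk1; apply: hns; lia.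
  have := G u (a.+1 + b.+1) hsz u0 hw hn 0 (a.+1 + b.+1) (leq0n _) (leqnn _).
  by rewrite u0 uN => /(_ erefl).
Qed.

Lemma stree_vertexP c s : stree_vertex c s <-> forall k, k < size s -> nth 0 s k < c k.
Proof.
split.
- move/allP=> H k hk; apply: (H k); by rewrite mem_iota.
- move=> H; apply/allP=> k; rewrite mem_iota => /andP [_ hk]; exact: H.
Qed.

Lemma stree_rcons c s i : stree_vertex c (rcons s i) <-> stree_vertex c s /\ i < c (size s).
Proof.
rewrite !stree_vertexP; split.
- move=> H; split.
  + move=> k hk; have := H k; rewrite size_rcons nth_rcons hk; apply; lia.
  + have := H (size s); rewrite size_rcons nth_rcons ltnn eqxx; apply; lia.
- case=> H1 H2 k; rewrite size_rcons nth_rcons => hk; case: (ltngtP k (size s)) => h.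
  + by apply: H1.
  + lia.
  + by rewrite h.
Qed.

Variables (r : nat) (c : nat -> nat).
Hypothesis hdeg : forall s, inrange s -> size s < r -> size (ch (st s)) = c (size s).

Lemma stree_inrange s : size s <= r -> (stree_vertex c s <-> inrange s).
Proof.
elim/last_ind: s => [|s i IH]; first by move=> _; split => // _; exact: inrange_nil.
rewrite size_rcons => hs; rewrite stree_rcons inrange_rcons.
have hs' : size s <= r by lia.
split.
- case=> h1 h2; have h3 := (IH hs').1 h1; split => //; by rewrite hdeg.
- case=> h1 h2; split; first exact: (IH hs').2.
  by rewrite -hdeg.
Qed.

Lemma sball_iff s : stree_ball c r s <-> inrange s /\ size s <= r.
Proof.
rewrite /stree_ball; split.
- by case/andP=> h1 h2; split => //; apply/(stree_inrange h1).
- by case=> h1 h2; rewrite h2 /=; apply/(stree_inrange h2).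
Qed.

Lemma ball_phi k x : x \in ball g k v <-> exists s, [/\ inrange s, size s <= k & phi s = x].
Proof.
elim: k x => [|k IH] x /=.
- rewrite inE; split.
  + move/eqP=> ->; exists [::]; split => //; exact: inrange_nil.
  + by case=> s [_]; rewrite leqn0 => /nilP -> <-.
- rewrite in_setU; split.
  + case/orP.
    * case/IH=> s [h1 h2 h3]; exists s; split => //; lia.
    * case/bigcupP=> u /IH [s [h1 h2 h3]]; rewrite inE => hux.
      case: (eqVneq x (st s).1) => hx.
      -- case/lastP: s h1 h2 h3 hx => [|s1 j] h1 h2 h3 hx.
         ++ by move: hux; rewrite -h3 hx /= gi.
         ++ exists s1; case/inrange_rcons: h1 => h1 _; split => //.
            ** by move: h2; rewrite size_rcons; lia.
            ** by rewrite hx st_fst_rcons.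
      -- have hxc : x \in ch (st s) by rewrite ch_mem hx andbT; rewrite /phi in h3; rewrite h3.
         exists (rcons s (index x (ch (st s)))); split.
         ++ by apply/inrange_rcons; split => //; rewrite index_mem.
         ++ by rewrite size_rcons.
         ++ by rewrite phi_rcons nth_index.
  + case=> s [h1 h2 h3]; case: (leqP (size s) k) => hk.
    * by apply/orP; left; apply/IH; exists s.
    * apply/orP; right; case/lastP: s h1 h2 h3 hk => [|s1 j] h1 h2 h3 hk; first by [].
      apply/bigcupP; exists (phi s1).
      -- apply/IH; exists s1; case/inrange_rcons: h1 => h1 _; split => //.
         by move: h2; rewrite size_rcons.
      -- rewrite inE -h3 -(st_fst_rcons s1 j) /phi; apply: st_edge => //; by case: (s1).
Qed.

Lemma adj_half (s t : seq nat) :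
  (size t == (size s).+1) && (s == take (size s) t) <-> exists i, t = rcons s i.
Proof.
split.
- case/lastP: t => [|t1 j]; first by [].
  rewrite size_rcons eqSS => /andP [/eqP h1 /eqP h2]; exists j.
  by move: h2; rewrite -h1 take_rcons_size => ->.
- by case=> i ->; rewrite size_rcons eqxx take_rcons_size eqxx.
Qed.

Lemma adj_iff s t : stree_adj s t <-> (exists i, t = rcons s i) \/ (exists i, s = rcons t i).
Proof.
rewrite /stree_adj; split.
- by case/orP => [/adj_half h|/adj_half h]; [left|right].
- by case=> [/adj_half ->|/adj_half ->]; rewrite ?orbT.
Qed.

Hypothesis Gd : goodv (r.+1 + r.+1).

Definition fmap (x : V) : seq nat :=
  match pselect (exists s, [/\ inrange s, size s <= r & phi s = x]) with
  | left h => sval (cid h)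
  | right _ => [::]
  end.

Lemma fmap_spec x : x \in ball g r v -> [/\ inrange (fmap x), size (fmap x) <= r & phi (fmap x) = x].
Proof.
move/ball_phi=> h; rewrite /fmap; case: pselect => [h'|//].
exact: (svalP (cid h')).
Qed.

Lemma fmap_phi s : inrange s -> size s <= r -> fmap (phi s) = s.
Proof.
move=> h1 h2.
have hb : phi s \in ball g r v by apply/ball_phi; exists s.
case: (fmap_spec hb) => h3 h4 h5.
apply: (phi_inj Gd) => //; lia.
Qed.

Lemma iso_of_good : ball_iso_tree g r v c.
Proof.
exists fmap; split.
- by rewrite -[v]/(phi [::]) fmap_phi //; exact: inrange_nil.
- move=> x y hx hy hf.
  by case: (fmap_spec hx) => _ _ <-; case: (fmap_spec hy) => _ _ <-; rewrite hf.
- move=> x hx; case: (fmap_spec hx) => h1 h2 _; exact/sball_iff.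
- move=> s /sball_iff [h1 h2]; exists (phi s); last exact: fmap_phi.
  by apply/ball_phi; exists s.
- move=> x y hx hy.
  case: (fmap_spec hx) => hs1 hs2 hs3; case: (fmap_spec hy) => ht1 ht2 ht3.
  set s := fmap x in hs1 hs2 hs3 *; set t := fmap y in ht1 ht2 ht3 *.
  apply/idP/idP.
  + move=> hxy; apply/adj_iff.
    case: (eqVneq y (st s).1) => hy1.
    * case/lastP: s hs1 hs2 hs3 hy1 => [|s1 j] hs1 hs2 hs3 hy1.
      -- by move: hxy; rewrite -hs3 hy1 /= gi.
      -- right; exists j; congr rcons.
         case/inrange_rcons: hs1 => hs1 _.
         apply: (phi_inj Gd) => //; first by move: hs2; rewrite size_rcons; lia.
         by rewrite ht3 hy1 st_fst_rcons.
    * have hyc : y \in ch (st s) by rewrite ch_mem hy1 andbT; rewrite /phi in hs3; rewrite hs3.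
      left; exists (index y (ch (st s))).
      have hr : inrange (rcons s (index y (ch (st s)))).
        by apply/inrange_rcons; split => //; rewrite index_mem.
      apply: (phi_inj Gd) => //; first by rewrite size_rcons; lia.
      by rewrite ht3 phi_rcons nth_index.
  + case/adj_iff => [[i ht]|[i hs]].
    * rewrite -hs3 -ht3 ht -(st_fst_rcons s i) /phi; apply: st_edge; first by rewrite -ht.
      by case: (s).
    * rewrite gs -hs3 -ht3 hs -(st_fst_rcons t i) /phi; apply: st_edge; first by rewrite -hs.
      by case: (t).
Qed.

End Tree.

Lemma card_le_sum (T : finType) (B : {set T}) N (A : nat -> {set T}) :
  (forall x, x \in B -> exists2 m, m < N & x \in A m) -> #|B| <= \sum_(m < N) #|A m|.
Proof.
move=> H.
have e1 : forall (C : {set T}), #|C| = \sum_x (x \in C).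
  by move=> C; rewrite -sum1_card big_mkcond.
rewrite e1 (eq_bigr (fun m : 'I_N => \sum_x (x \in A m))); last by move=> m _; rewrite e1.
rewrite exchange_big /=; apply: leq_sum => x _.
case: (boolP (x \in B)) => hx //.
case: (H x hx) => m hm hA.
by rewrite (bigD1 (Ordinal hm)) //= hA.
Qed.

Section Lasso.
Variables (V : finType) (g : rel V).

Definition tw m (t : m.+1.-tuple V) : nat -> V := fun i => nth (thead t) t i.

Definition lasso (u : nat -> V) m := [/\ walk g u m, nback u m, sa u m.-1 & ~ sa u m].

Definition Lset m := [set t : m.+1.-tuple V | `[< lasso (tw t) m >]].
Definition Lm m := #|Lset m|.

Lemma lasso_ext u u' m : (forall i, i <= m -> u i = u' i) -> lasso u m -> lasso u' m.
Proof.
move=> E [h1 h2 h3 h4]; split.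
- move=> i hi; rewrite -!E; [exact: h1|..]; lia.
- move=> i hi; rewrite -!E; [exact: h2|..]; lia.
- move=> i j hi hj; rewrite -!E; [exact: h3|..]; lia.
- move=> h; apply: h4 => i j hi hj; rewrite !E //; exact: h.
Qed.

Lemma tw_mktuple m (u : nat -> V) i : i <= m ->
  tw [tuple u i | i < m.+1] i = u i.
Proof.
move=> hi; rewrite /tw.
have -> : i = Ordinal (hi : i < m.+1) by [].
by rewrite nth_mktuple.
Qed.

Lemma good_of_nolasso v R :
  (forall m, m <= R -> forall t, t \in Lset m -> tw t 0 <> v) -> goodv g v R.
Proof.
move=> H u k hk u0 hw hn.
case: (pselect (sa u k)) => // hns; exfalso.
have exP : exists n, `[< ~ sa u n >] by exists k; apply/asboolP.
case: (ex_minnP exP) => m /asboolP hm hmin.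
have hmk : m <= k by apply: hmin; apply/asboolP.
have hm0 : 0 < m.
  case: m hm {hmin hmk} => // hm; exfalso; apply: hm => i j hi hj _; lia.
have hsa : sa u m.-1.
  case: (pselect (sa u m.-1)) => // h; have := hmin m.-1 (introT (asboolP _) h); lia.
have hl : lasso u m.
  split => //.
  - move=> i hi; apply: hw; lia.
  - move=> i hi; apply: hn; lia.
pose t := [tuple u i | i < m.+1].
have ht : t \in Lset m.
  rewrite inE; apply/asboolP; apply: (lasso_ext _ hl) => i hi; by rewrite tw_mktuple.
apply: (H m _ t ht); first lia.
by rewrite tw_mktuple.
Qed.

Lemma bad_count R :
  #|[set x | ~~ `[< goodv g x R >]]| <= \sum_(m < R.+1) #|[set tw t 0 | t in Lset m]|.
Proof.
apply: (card_le_sum (A := fun m => [set tw t 0 | t in Lset m])) => x; rewrite inE => /asboolP hx.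
case: (pselect (exists m, m <= R /\ exists2 t, t \in Lset m & tw t 0 = x)).
- case=> m [hm [t ht htx]]; exists m => //.
  by apply/imsetP; exists t.
- move=> hne; exfalso; apply: hx; apply: good_of_nolasso => m hm t ht htx.
  by apply: hne; exists m; split => //; exists t.
Qed.
End Lasso.

Section Lift.
Variables (V : finType) (g : rel V).
Hypotheses (gs : symmetric g) (gi : irreflexive g).

Definition key (x y : V) : V * V :=
  if (enum_rank x <= enum_rank y)%N then (x, y) else (y, x).

Lemma key_sym x y : key x y = key y x.
Proof.
rewrite /key; case: (leqP (enum_rank x) (enum_rank y)) => h1;
  case: (leqP (enum_rank y) (enum_rank x)) => h2 //.
- have /val_inj/enum_rank_inj -> : nat_of_ord (enum_rank x) = nat_of_ord (enum_rank y).
    by apply/eqP; rewrite eqn_leq h1 h2.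
  by [].
- by move: (ltn_trans h1 h2); rewrite ltnn.
Qed.

Lemma key_eq a b c d : key a b = key c d -> (a = c /\ b = d) \/ (a = d /\ b = c).
Proof.
rewrite /key; case: ifP => _; case: ifP => _ [-> ->]; by [left|right|right|left].
Qed.

Definition sig (f : {ffun V * V -> bool}) x y := f (key x y).

Lemma sig_sym f x y : sig f x y = sig f y x.
Proof. by rewrite /sig key_sym. Qed.

Definition Hl (f : {ffun V * V -> bool}) : rel (V * bool) :=
  fun p q => g p.1 q.1 && (q.2 == p.2 (+) sig f p.1 q.1).

Lemma Hl_2lift f : is_2lift g (Hl f).
Proof.
split; first split.
- move=> [x a] [y b]; rewrite /Hl /= gs sig_sym.
  by case: a; case: b; case: (sig f y x).
- by move=> [x a]; rewrite /Hl /= gi.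
- move=> x y; rewrite /Hl /=; case: (g x y) => //.
  case: (sig f x y); [right|left] => a b /=; by case: a; case: b.
Qed.

Lemma Hl_deg f x a : deg (Hl f) (x, a) = deg g x.
Proof.
rewrite /deg.
have -> : [set w | Hl f (x, a) w] = [set (y, a (+) sig f x y) | y in [set y | g x y]].
  apply/setP => [[y b]]; rewrite inE /Hl /=.
  apply/idP/imsetP.
  - by case/andP=> h1 /eqP ->; exists y; rewrite ?inE.
  - by case=> y' ; rewrite inE => h [-> ->]; rewrite h eqxx.
by rewrite card_imset // => y1 y2 [].
Qed.

Lemma first_lasso (u : nat -> V) k : walk g u k -> nback u k -> ~ sa u k ->
  exists j, j <= k /\ lasso g u j.
Proof.
move=> hw hn hns.
have exP : exists n, `[< ~ sa u n >] by exists k; apply/asboolP.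
case: (ex_minnP exP) => m /asboolP hm hmin.
have hmk : m <= k by apply: hmin; apply/asboolP.
have hm0 : 0 < m.
  case: m hm {hmin hmk} => // hm; exfalso; apply: hm => i j hi hj _; lia.
have hsa : sa u m.-1.
  case: (pselect (sa u m.-1)) => // h; have := hmin m.-1 (introT (asboolP _) h); lia.
exists m; split => //; split => //.
- move=> i hi; apply: hw; lia.
- move=> i hi; apply: hn; lia.
Qed.

Definition segpar f (u : nat -> V) i j := \big[addb/false]_(i <= l < j) sig f (u l) (u l.+1).

Lemma bits f (u' : nat -> V * bool) m : walk (Hl f) u' m ->
  forall i j, i <= j -> j <= m -> (u' j).2 = (u' i).2 (+) segpar f (fun l => (u' l).1) i j.
Proof.
move=> hw i j hij; elim: j hij => [|j IH] hij hjm.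
- have -> : i = 0 by lia. by rewrite /segpar big_geq // addbF.
- case: (ltngtP i j.+1) => h; last first.
  + by rewrite h /segpar big_geq // addbF.
  + lia.
  + rewrite /segpar big_nat_recr /=; last by lia.
    have := hw j hjm; rewrite /Hl => /andP [_ /eqP ->].
    rewrite (IH _ (ltnW hjm)); last by lia.
    by rewrite /segpar addbA.
Qed.

Lemma proj_walk f (u' : nat -> V * bool) m : walk (Hl f) u' m -> walk g (fun l => (u' l).1) m.
Proof. by move=> hw i hi; case/andP: (hw i hi). Qed.

Lemma proj_nback f (u' : nat -> V * bool) m : walk (Hl f) u' m -> nback u' m ->
  nback (fun l => (u' l).1) m.
Proof.
move=> hw hn i hi /= he; apply: (hn i hi).
have hii : i <= i.+2 by lia.
have hb := bits hw hii hi.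
move: hb; rewrite /segpar big_nat_recr /=; last by lia.
rewrite big_nat1 he sig_sym addbb addbF => hb.
by rewrite [u' i]surjective_pairing [u' i.+2]surjective_pairing hb he.
Qed.

Definition ptup m (t : m.+1.-tuple (V * bool)) : m.+1.-tuple V := [tuple of map fst t].

Lemma tw_proj m (t : m.+1.-tuple (V * bool)) i : tw (ptup t) i = (tw t i).1.
Proof.
rewrite /tw /ptup /=.
have hh : thead [tuple of map fst t] = (thead t).1.
  by rewrite /thead !(tnth_nth (thead t).1) /= (nth_map (thead t)) ?size_tuple // (tnth_nth (thead t)).
rewrite hh; case: (ltnP i (size t)) => hi.
- by rewrite (nth_map (thead t)).
- by rewrite !nth_default ?size_map.
Qed.

Definition Sset f m := [set t : m.+1.-tuple V |
  `[< lasso g (tw t) m /\ exists i, [/\ i < m, tw t i = tw t m & segpar f (tw t) i m = false] >]].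
Definition Xset m := [set t : m.+1.-tuple V |
  `[< walk g (tw t) m /\ exists j, j < m /\ lasso g (tw t) j >]].

Lemma tw_tnth m (T : finType) (t : m.+1.-tuple T) (j : 'I_m.+1) : tnth t j = tw t j.
Proof. by rewrite /tw (tnth_nth (thead t)). Qed.

Lemma lift_bound f m : Lm (Hl f) m <= 2 * (#|Sset f m| + #|Xset m|).
Proof.
pose F (t : m.+1.-tuple (V * bool)) := (ptup t, (tw t 0).2).
have eu : forall t : m.+1.-tuple (V * bool), tw (ptup t) = (fun l => (tw t l).1).
  by move=> t; apply: funext => l; exact: tw_proj.
have inj : {in Lset (Hl f) m &, injective F}.
  move=> t1 t2; rewrite !inE => /asboolP [hw1 _ _ _] /asboolP [hw2 _ _ _] [hp hb].
  have hp2 : ptup t1 = ptup t2 by apply: val_inj.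
  have e1 : (fun l => (tw t1 l).1) = (fun l => (tw t2 l).1) by rewrite -!eu hp2.
  apply: eq_from_tnth => j; rewrite !tw_tnth.
  have hj : (j <= m)%N by have := ltn_ord j; lia.
  rewrite [tw t1 j]surjective_pairing [tw t2 j]surjective_pairing.
  rewrite (bits hw1 (leq0n j) hj) (bits hw2 (leq0n j) hj) hb e1.
  by have := congr1 (fun h : nat -> V => h (nat_of_ord j)) e1 => /= ->.
have sub : F @: Lset (Hl f) m \subset setX (Sset f m :|: Xset m) setT.
  apply/subsetP => p /imsetP [t]; rewrite inE => /asboolP [hw hn hsa hnsa] ->.
  rewrite /F in_setX in_setT andbT in_setU.
  have hwu : walk g (tw (ptup t)) m by rewrite eu; exact: proj_walk hw.
  have hnu : nback (tw (ptup t)) m by rewrite eu; exact: proj_nback hw hn.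
  case: (pselect (sa (tw (ptup t)) m.-1)) => hs.
  - apply/orP; left; rewrite inE; apply/asboolP.
    have hnsu : ~ sa (tw (ptup t)) m.
      move=> hs'; apply: hnsa => i j hi hj he; apply: hs' => //.
      by rewrite !tw_proj he.
    split; first by split.
    case: (pselect (exists i, i < m /\ tw t i = tw t m)).
    + case=> i [hi he]; exists i; split => //; first by rewrite !tw_proj he.
      have hb := bits hw (ltnW hi) (leqnn m).
      rewrite eu; move: hb; rewrite he.
      by case: (segpar _ _ _ _); case: (tw t m).2.
    + move=> hne; exfalso; apply: hnsa => i j hi hj he.
      case: (ltngtP i m) => hi1; [|lia|]; case: (ltngtP j m) => hj1; try lia.
      * apply: hsa => //; try lia.
      * by exfalso; apply: hne; exists i; split => //; rewrite he hj1.
      * by exfalso; apply: hne; exists j; split => //; rewrite -he hi1.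
  - apply/orP; right; rewrite inE; apply/asboolP; split => //.
    have hm : 0 < m.
      case: (posnP m) => // hm0; exfalso; apply: hs => i j hi hj _; lia.
    case: (first_lasso (k := m.-1) (u := tw (ptup t))) => //.
    + move=> i hi; apply: hwu; lia.
    + move=> i hi; apply: hnu; lia.
    + move=> j [hj hl]; exists j; split => //; lia.
rewrite /Lm -(card_in_imset inj); apply: leq_trans (subset_leq_card sub) _.
rewrite cardsX cardsT card_bool cardsU; lia.
Qed.

Lemma key_unique (u : nat -> V) m i0 : lasso g u m -> i0 < m -> u i0 = u m ->
  forall l, i0 < l -> l < m -> key (u l) (u l.+1) != key (u i0) (u i0.+1).
Proof.
case=> hw hn hsa hnsa hi0 he l hl1 hl2; apply/eqP => /key_eq [[e1 e2]|[e1 e2]].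
- have := hsa l i0 ltac:(lia) ltac:(lia) e1; lia.
- have hne : u i0 != u i0.+1 by apply/eqP => h; have := hw i0 hi0; rewrite h gi.
  case: (ltngtP i0.+1 m) => h1; last by lia.
  + have el : l = i0.+1 by apply: hsa; [lia|lia|exact: e1].
    subst l.
    case: (ltngtP i0.+2 m) => h2.
    * have := hsa i0.+2 i0 ltac:(lia) ltac:(lia) e2; lia.
    * lia.
    * by apply: (hn i0); [lia | rewrite -e2].
  + (* i0.+1 = m : impossible since l < m and i0 < l *) lia.
Qed.

Definition flipf (c : V * V) (f : {ffun V * V -> bool}) : {ffun V * V -> bool} :=
  [ffun x => f x (+) (x == c)].

Lemma flipfK c : involutive (flipf c).
Proof. by move=> f; apply/ffunP => x; rewrite !ffunE -addbA addbb addbF. Qed.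

Lemma segpar_flip c f (u : nat -> V) i j :
  segpar (flipf c f) u i j =
  segpar f u i j (+) \big[addb/false]_(i <= l < j) (key (u l) (u l.+1) == c).
Proof. by rewrite /segpar -big_split /=; apply: eq_bigr => l _; rewrite /sig ffunE. Qed.

Lemma half_card (P : {ffun V * V -> bool} -> bool) (h : {ffun V * V -> bool} -> {ffun V * V -> bool}) :
  involutive h -> (forall f, P (h f) = ~~ P f) ->
  #|[set f | P f]| * 2 = #|{ffun V * V -> bool}|.
Proof.
move=> hK hP.
have e : #|[set f | P f]| = #|~: [set f | P f]|.
  have e2 : h @: [set f | P f] = ~: [set f | P f].
    apply/setP => f; rewrite !inE; apply/imsetP/idP.
    - by case=> f' ; rewrite inE => hf ->; rewrite hP hf.
    - by move=> hf; exists (h f); rewrite ?inE ?hP ?hK.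
  by rewrite -e2 card_imset //; exact: can_inj hK.
by rewrite muln2 -addnn {2}e cardsC.
Qed.

Lemma S_avg m :
  \sum_(f : {ffun V * V -> bool}) #|Sset f m| * 2 <= #|{ffun V * V -> bool}| * Lm g m.
Proof.
have e1 : forall (T : finType) (C : {set T}), #|C| = \sum_x (x \in C).
  by move=> T C; rewrite -sum1_card big_mkcond.
rewrite -big_distrl /= (eq_bigr (fun f => \sum_t (t \in Sset f m))); last by move=> f _; rewrite e1.
rewrite exchange_big /= big_distrl /= /Lm e1 big_distrr /=; apply: leq_sum => t _.
case: (boolP (t \in Lset g m)) => ht; last first.
  rewrite big1 // => f _; case: (boolP (t \in Sset f m)) => // hs.
  by exfalso; move: hs ht; rewrite !inE => /asboolP [hl _] /asboolP [].
rewrite muln1.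
move: (ht); rewrite inE => /asboolP hl; case: (hl) => hw hn hsa hnsa.
have [i0 [hi0 he0]] : exists i0, i0 < m /\ tw t i0 = tw t m.
  case: (pselect (exists i0, i0 < m /\ tw t i0 = tw t m)) => // hne; exfalso.
  apply: hnsa => i j hi hj he.
  case: (ltngtP i m) => hi1; [|lia|]; case: (ltngtP j m) => hj1; try lia.
  * apply: hsa => //; try lia.
  * by exfalso; apply: hne; exists i; split => //; rewrite he hj1.
  * by exfalso; apply: hne; exists j; split => //; rewrite -he hi1.
have eS : forall f, (t \in Sset f m) = ~~ segpar f (tw t) i0 m.
  move=> f; rewrite inE; apply/asboolP/idP.
  - case=> _ [i [hi he hs]]; have ei : i = i0 by apply: hsa; [lia|lia|rewrite he he0].
    by rewrite -ei hs.
  - by move=> hs; split => //; exists i0; split => //; apply/negbTE.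
rewrite (eq_bigr (fun f => (f \in [set f | ~~ segpar f (tw t) i0 m]) : nat)); last first.
  by move=> f _; rewrite inE eS.
rewrite -e1; apply: eq_leq; apply: (half_card (h := flipf (key (tw t i0) (tw t i0.+1)))).
  exact: flipfK.
move=> f; rewrite segpar_flip big_ltn // eqxx.
rewrite big_nat_cond big1; first by rewrite addbF addbT.
move=> l /andP [/andP [h1 h2] _]; apply/negbTE; exact: (key_unique hl hi0 he0).
Qed.

Definition Yset j m := [set t : m.+1.-tuple V | `[< walk g (tw t) m /\ lasso g (tw t) j >]].

Lemma X_le m : #|Xset m| <= \sum_(j < m) #|Yset j m|.
Proof.
apply: (card_le_sum (A := fun j => Yset j m)) => t; rewrite inE => /asboolP [hw [j [hj hl]]].
by exists j => //; rewrite inE; apply/asboolP.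
Qed.

Variable D : nat.
Hypothesis hD : forall x, deg g x <= D.

Lemma Y_step j n : j <= n -> #|Yset j n.+1| <= D * #|Yset j n|.
Proof.
move=> hjn.
pose F (t : n.+2.-tuple V) := ([tuple tw t i | i < n.+1], tw t n.+1).
have inj : injective F.
  move=> t1 t2 E; have e1 := congr1 fst E; have e2 := congr1 snd E; simpl in e1, e2.
  apply: eq_from_tnth => i; rewrite !tw_tnth.
  case: (ltnP i n.+1) => hi.
  + have := congr1 (fun t : n.+1.-tuple V => tw t i) e1.
    by rewrite /= !tw_mktuple.
  + have ei : nat_of_ord i = n.+1 by have := ltn_ord i; lia.
    by rewrite ei.
pose Z := [set p : n.+1.-tuple V * V | (p.1 \in Yset j n) && g (tw p.1 n) p.2].
have sub : F @: Yset j n.+1 \subset Z.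
  apply/subsetP => p /imsetP [t]; rewrite inE => /asboolP [hw hl] ->.
  rewrite inE /=; apply/andP; split.
  - rewrite inE; apply/asboolP; split.
    + move=> i hi; rewrite !tw_mktuple; [apply: hw|..]; lia.
    + apply: (lasso_ext _ hl) => i hi; rewrite tw_mktuple //; lia.
  - rewrite tw_mktuple //; apply: hw; lia.
rewrite -(card_imset _ inj); apply: leq_trans (subset_leq_card sub) _.
have e1 : forall (T : finType) (C : {set T}), #|C| = \sum_x (x \in C).
  by move=> T C; rewrite -sum1_card big_mkcond.
have eZ : \sum_p ((p \in Z) : nat) = \sum_t0 \sum_y (((t0, y) \in Z) : nat).
  by rewrite pair_big; apply: eq_bigr => [[a b]] _.
rewrite e1 eZ.
rewrite (e1 _ (Yset j n)) big_distrr /=; apply: leq_sum => t0 _.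
case: (boolP (t0 \in Yset j n)) => h.
- rewrite muln1; apply: leq_trans (hD (tw t0 n)); rewrite /deg e1 /=.
  by apply: eq_leq; apply: eq_bigr => y _; rewrite [(_, _) \in Z]inE /= h inE.
- by rewrite big1 // => y _; rewrite [(_, _) \in Z]inE /= (negbTE h).
Qed.

Lemma Y_le j k : #|Yset j (j + k)| <= D ^ k * Lm g j.
Proof.
elim: k => [|k IH].
- rewrite addn0 expn0 mul1n /Lm; apply: subset_leq_card; apply/subsetP => t.
  by rewrite !inE => /asboolP [_ hl]; apply/asboolP.
- rewrite addnS expnS -mulnA; apply: leq_trans (Y_step _) _; first lia.
  by rewrite leq_mul2l IH orbT.
Qed.

Lemma X_bound m : #|Xset m| <= \sum_(j < m) D ^ (m - j) * Lm g j.
Proof.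
apply: leq_trans (X_le m) _; apply: leq_sum => j _.
have hj : j <= m by have := ltn_ord j; lia.
by move: (Y_le j (m - j)); rewrite subnKC.
Qed.

End Lift.

Section Pot.
Variables (Q D : nat).

Definition PhiL (L : nat -> nat) K := \sum_(0 <= m < K) Q ^ (K - m) * L m.
Definition AL (L : nat -> nat) K := \sum_(0 <= j < K) D ^ (K - j) * L j.
Definition TL (L : nat -> nat) K := \sum_(0 <= m < K) Q ^ (K - m) * AL L m.

Lemma sum_rec (D0 : nat) (L : nat -> nat) K :
  \sum_(0 <= m < K.+1) D0 ^ (K.+1 - m) * L m = D0 * (\sum_(0 <= m < K) D0 ^ (K - m) * L m + L K).
Proof.
rewrite big_nat_recr //= subSnn expn1 mulnDr; congr (_ + _); rewrite big_distrr /=.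
apply: eq_big_nat => m hm; rewrite subSn; last by lia.
by rewrite expnS mulnA.
Qed.

Lemma pot_ineq L K : 4 * D <= Q -> 3 * TL L K + 4 * AL L K <= PhiL L K.
Proof.
move=> hQ; elim: K => [|K IH]; first by rewrite /TL /AL /PhiL !big_geq.
rewrite /TL /AL /PhiL !sum_rec -/(TL L K) -/(AL L K) -/(PhiL L K).
set T := TL L K in IH *; set A := AL L K in IH *; set P := PhiL L K in IH *.
have h1 : Q * (3 * T + 4 * A) <= Q * P by rewrite leq_mul2l IH orbT.
have h2 : 4 * D * A <= Q * A by rewrite leq_mul2r hQ orbT.
have h3 : 4 * D * L K <= Q * L K by rewrite leq_mul2r hQ orbT.
nia.
Qed.

End Pot.

Definition Psi Q (W : finType) (h : rel W) := PhiL Q (Lm h) #|W|.+1.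

Definition fmin Q (W : finType) (h : rel W) : {ffun W * W -> bool} :=
  [arg min_(f < [ffun => false]) Psi Q (Hl h f)].

Lemma Lm_big (W : finType) (h : rel W) m : #|W| < m -> Lm h m = 0.
Proof.
move=> hm; apply: eq_card0 => t; rewrite inE; apply/asboolP => [[hw hn hsa hnsa]].
pose F (i : 'I_m) : W := tw t i.
have inj : injective F.
  move=> i j /hsa he; apply: val_inj => /=; apply: he; have := ltn_ord i; have := ltn_ord j; lia.
have := leq_card F inj; rewrite card_ord; lia.
Qed.

Section Avg.
Variables (V : finType) (g : rel V).
Hypotheses (gs : symmetric g) (gi : irreflexive g).
Variables (D Q : nat).
Hypothesis hD : forall x, deg g x <= D.
Hypothesis hQ : 4 * D <= Q.

Lemma sumf_Lm m :
  \sum_(f : {ffun V * V -> bool}) Lm (Hl g f) m <=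
  #|{ffun V * V -> bool}| * (Lm g m + 2 * AL D (Lm g) m).
Proof.
apply: (@leq_trans (\sum_(f : {ffun V * V -> bool}) 2 * (#|Sset g f m| + #|Xset g m|))).
  by apply: leq_sum => f _; exact: lift_bound.
rewrite -big_distrr /= big_split /= sum_nat_const cardT -cardT /=.
have h1 := S_avg gi m.
have h2 : #|Xset g m| <= AL D (Lm g) m.
  by rewrite /AL big_mkord; exact: X_bound hD m.
rewrite -big_distrl /= in h1.
set F := #|{ffun V * V -> bool}| in h1 *.
have h3 : F * #|Xset g m| <= F * AL D (Lm g) m by rewrite leq_mul2l h2 orbT.
rewrite !mulnDr; apply: leq_add; first by rewrite mulnC; exact: h1.
by rewrite muln0 addn0 addnn -mul2n leq_mul2l /=; exact: h3.
Qed.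

Lemma sumf_Phi K :
  3 * \sum_(f : {ffun V * V -> bool}) PhiL Q (Lm (Hl g f)) K <=
  5 * #|{ffun V * V -> bool}| * PhiL Q (Lm g) K.
Proof.
have e : \sum_(f : {ffun V * V -> bool}) PhiL Q (Lm (Hl g f)) K =
         \sum_(0 <= m < K) Q ^ (K - m) * \sum_(f : {ffun V * V -> bool}) Lm (Hl g f) m.
  rewrite /PhiL exchange_big /=; apply: eq_bigr => m _; by rewrite big_distrr.
rewrite e.
have h1 : \sum_(0 <= m < K) Q ^ (K - m) * \sum_(f : {ffun V * V -> bool}) Lm (Hl g f) m <=
          #|{ffun V * V -> bool}| * (PhiL Q (Lm g) K + 2 * TL Q D (Lm g) K).
  apply: (@leq_trans (\sum_(0 <= m < K) #|{ffun V * V -> bool}| *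
      (Q ^ (K - m) * Lm g m + 2 * (Q ^ (K - m) * AL D (Lm g) m)))).
    apply: leq_sum => m _.
    have -> : #|{ffun V * V -> bool}| * (Q ^ (K - m) * Lm g m + 2 * (Q ^ (K - m) * AL D (Lm g) m))
      = Q ^ (K - m) * (#|{ffun V * V -> bool}| * (Lm g m + 2 * AL D (Lm g) m)) by lia.
    by rewrite leq_mul2l sumf_Lm orbT.
  apply: eq_leq; rewrite -big_distrr /= big_split /= -big_distrr /=.
  by rewrite /PhiL /TL.
have h2 := pot_ineq (Lm g) K hQ.
nia.
Qed.

End Avg.

Section Step.
Variables (V : finType) (g : rel V).
Hypotheses (gs : symmetric g) (gi : irreflexive g).
Variables (D Q : nat).
Hypothesis hD : forall x, deg g x <= D.
Hypothesis hQ : 4 * D <= Q.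

Lemma Phi_ext k : PhiL Q (Lm g) (#|V|.+1 + k) = Q ^ k * Psi Q g.
Proof.
elim: k => [|k IH]; first by rewrite addn0 expn0 mul1n.
rewrite addnS /PhiL sum_rec -/(PhiL Q (Lm g) _) IH Lm_big ?addn0 ?expnS ?mulnA //.
lia.
Qed.

Lemma step_ineq : 3 * Psi Q (Hl g (fmin Q g)) <= 5 * Q ^ #|V| * Psi Q g.
Proof.
have hmin : forall f, Psi Q (Hl g (fmin Q g)) <= Psi Q (Hl g f).
  by rewrite /fmin; case: arg_minnP => // f0 _ h f; apply: h.
have hF : 0 < #|{ffun V * V -> bool}| by apply/card_gt0P; exists [ffun => false].
have hs := sumf_Phi gi hD hQ (#|{: V * bool}|.+1).
have hc : #|{: V * bool}|.+1 = #|V|.+1 + #|V| by rewrite card_prod card_bool; lia.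
rewrite hc Phi_ext -/(Psi Q g) in hs.
have h1 : #|{ffun V * V -> bool}| * Psi Q (Hl g (fmin Q g)) <=
          \sum_(f : {ffun V * V -> bool}) PhiL Q (Lm (Hl g f)) (#|{: V * bool}|.+1).
  rewrite -sum_nat_const; apply: leq_sum => f _; exact: hmin.
rewrite -hc in hs.
have h2 : #|{ffun V * V -> bool}| * (3 * Psi Q (Hl g (fmin Q g))) <=
          #|{ffun V * V -> bool}| * (5 * Q ^ #|V| * Psi Q g).
  apply: leq_trans (_ : 3 * \sum_(f : {ffun V * V -> bool}) PhiL Q (Lm (Hl g f)) (#|{: V * bool}|.+1) <= _).
  - rewrite mulnCA leq_mul2l h1 orbT //.
  - apply: leq_trans hs _; apply: eq_leq; lia.
by rewrite leq_mul2l gtn_eqF in h2.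
Qed.

End Step.

Section Deg.
Variables (V : finType) (g : rel V).
Hypotheses (gs : symmetric g) (gi : irreflexive g).
Variable v : V.

Lemma size_ch_deg s : inrange g v s ->
  size (ch g (st g v s)) = deg g (phi g v s) - (s != [::]).
Proof.
rewrite /ch -cardE /deg.
case/lastP: s => [|s i] H.
- rewrite /= subn0; apply: eq_card => y; rewrite !inE.
  by case: (eqVneq y v) => [->|]; rewrite ?gi ?andbT.
- have he := st_edge H; have hn : rcons s i <> [::] by case: (s).
  move/(_ hn): he => he.
  have -> : (rcons s i != [::]) = true by case: (s).
  set p := (st g v (rcons s i)).1.
  rewrite (cardsD1 p [set y | g (phi g v (rcons s i)) y]) inE /phi gs he add1n subn1 /=.
  apply: eq_card => y; rewrite !inE andbC.
  by [].
Qed.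

Lemma phi_parity (A : {set V}) (hA : forall u w, g u w -> (u \in A) != (w \in A)) s :
  inrange g v s -> (phi g v s \in A) = (v \in A) (+) odd (size s).
Proof.
elim/last_ind: s => [|s i IH] H; first by rewrite /= addbF.
case/inrange_rcons: (H) => H1 _.
have he := st_edge H; have hn : rcons s i <> [::] by case: (s).
move/(_ hn): he; rewrite st_fst_rcons => /hA.
rewrite size_rcons /= IH // -/(phi g v (rcons s i)).
by case: (phi g v (rcons s i) \in A); case: (v \in A); case: (odd (size s)).
Qed.

End Deg.

Lemma bernoulli56 i : 5 ^ i * (5 + i) <= 5 * 6 ^ i.
Proof.
elim: i => [|i IH] //.
rewrite !expnS.
have h : 6 * (5 ^ i * (5 + i)) <= 6 * (5 * 6 ^ i) by rewrite leq_mul2l IH.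
have h2 : 5 * (5 ^ i * (5 + i.+1)) <= 6 * (5 ^ i * (5 + i)).
  have : 5 * (5 + i.+1) <= 6 * (5 + i) by lia.
  move=> hh; have := leq_mul (leqnn (5 ^ i)) hh; lia.
lia.
Qed.

Lemma nat_tail (B n : nat) (C i : nat) :
  B * 3 ^ i <= C * 5 ^ i -> 2 ^ i <= n -> B * (5 + i) <= 5 * C * n.
Proof.
move=> h1 h2.
have p5 : 0 < 5 ^ i by rewrite expn_gt0.
rewrite -(leq_pmul2l p5).
have e6 : 6 ^ i = 3 ^ i * 2 ^ i by rewrite -expnMn.
have s1 : 5 ^ i * (B * (5 + i)) <= B * (5 * 6 ^ i).
  by have := leq_mul (leqnn B) (bernoulli56 i); lia.
have s2 : B * (5 * 6 ^ i) <= 5 * (C * 5 ^ i) * 2 ^ i.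
  rewrite e6; have := leq_mul (leq_mul (leqnn 5) h1) (leqnn (2 ^ i)); lia.
have s3 : 5 * (C * 5 ^ i) * 2 ^ i <= 5 * (C * 5 ^ i) * n by rewrite leq_mul2l h2 orbT.
have : 5 * (C * 5 ^ i) * n = 5 ^ i * (5 * C * n) by lia.
lia.
Qed.

Section RT.
Local Open Scope ring_scope.
Import Order.TTheory Num.Theory GRing.Theory.

Lemma rat_tail (B n : nat -> nat) (C N0 : nat) :
  (forall i, (N0 <= i)%N -> (B i * 3 ^ i <= C * 5 ^ i)%N) -> (forall i, (2 ^ i <= n i)%N) ->
  forall eps : rat, 0 < eps -> exists N, forall i, (N <= i)%N -> (B i)%:R / (n i)%:R < eps.
Proof.
move=> hB hn eps he.
pose N1 := Num.bound ((5 * C)%:R / eps).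
exists (maxn N0 N1) => i hi.
have hi0 : (N0 <= i)%N by apply: leq_trans hi; exact: leq_maxl.
have hi1 : (N1 <= i)%N by apply: leq_trans hi; exact: leq_maxr.
have hnat := nat_tail (hB i hi0) (hn i).
have hn0 : (0 < n i)%N by apply: leq_trans (hn i); rewrite expn_gt0.
have hb : (5 * C)%:R / eps < N1%:R by apply: archi_boundP; apply: divr_ge0; [exact: ler0n | exact: Order.POrderTheory.ltW].
have hb2 : ((5 * C)%:R : rat) < eps * (5 + i)%:R.
  rewrite mulrC -ltr_pdivrMr //; apply: (lt_le_trans hb); rewrite ler_nat; lia.
have hnat' : ((B i)%:R * (5 + i)%:R : rat) <= (5 * C)%:R * (n i)%:R.
  by rewrite -!natrM ler_nat.
rewrite ltr_pdivrMr ?ltr0n //.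
have h5 : (0 : rat) < (5 + i)%:R by rewrite ltr0n.
rewrite -(ltr_pM2r h5).
apply: (le_lt_trans hnat').
rewrite mulrAC ltr_pM2r; last by rewrite ltr0n.
exact: hb2.
Qed.

End RT.

Section Conv.
Local Open Scope ring_scope.
Import Order.TTheory Num.Theory GRing.Theory.

Lemma prop_abs (W : finType) (P : pred W) : (0 < #|W|)%N ->
  `|proportion P - 1| = (#|[set x | ~~ P x]|)%:R / (#|W|)%:R.
Proof.
move=> hW; rewrite /proportion.
have hc : #|W| = (#|[set x | P x]| + #|[set x | ~~ P x]|)%N.
  rewrite -(cardsC [set x | P x]); congr (_ + _)%N; apply: eq_card => x; by rewrite !inE.
have hn : (#|W|%:R : rat) != 0 by rewrite pnatr_eq0 -lt0n.
have -> : (#|[set x | P x]|)%:R / (#|W|)%:R - 1 = - ((#|[set x | ~~ P x]|)%:R / (#|W|)%:R : rat).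
  apply: (mulIf hn); rewrite mulrBl mulNr !mulfVK // mul1r hc natrD; ring.
by rewrite normrN ger0_norm // divr_ge0 // ler0n.
Qed.

End Conv.

Section Final.
Variables (T : finType) (e : rel T).
Hypotheses (hT : 0 < #|T|) (es : symmetric e) (ei : irreflexive e).
Variable D : nat.
Hypothesis hD : forall x, deg e x <= D.

Definition Qc := 4 * D.+1.

Fixpoint Gseq (i : nat) : rel (liftT T i) :=
  match i as i0 return rel (liftT T i0) with
  | 0 => e
  | i'.+1 => Hl (@Gseq i') (fmin Qc (@Gseq i'))
  end.
Arguments Gseq : clear implicits.

Lemma Gseq_simple i : symmetric (Gseq i) /\ irreflexive (Gseq i).
Proof.
elim: i => [|i [IH1 IH2]]; first by [].
by case: (Hl_2lift IH1 IH2 (fmin Qc (Gseq i))) => [[]].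
Qed.

Lemma Gseq_lift i : is_2lift (Gseq i) (Gseq i.+1).
Proof. by case: (Gseq_simple i) => h1 h2; exact: Hl_2lift. Qed.

Lemma Gseq_deg i (x : liftT T i.+1) : deg (Gseq i.+1) x = deg (Gseq i) x.1.
Proof. by case: x => y b; exact: Hl_deg. Qed.

Lemma Gseq_degD i x : deg (Gseq i) x <= D.
Proof.
elim: i x => [|i IH] x; first exact: hD.
by rewrite Gseq_deg.
Qed.

Lemma card_lift i : #|liftT T i| = 2 ^ i * #|T|.
Proof.
elim: i => [|i IH]; first by rewrite mul1n.
by rewrite /= card_prod card_bool IH expnS mulnC mulnA.
Qed.

Definition Pn i := Psi Qc (Gseq i).

Lemma hQc : 4 * D <= Qc. Proof. rewrite /Qc; lia. Qed.
Lemma Qc_gt0 : 0 < Qc. Proof. rewrite /Qc; lia. Qed.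

Lemma P_step i : 3 * Pn i.+1 <= 5 * Qc ^ #|liftT T i| * Pn i.
Proof.
case: (Gseq_simple i) => h1 h2.
rewrite /Pn /=; exact: (step_ineq h2 (@Gseq_degD i) hQc).
Qed.

Lemma P_closed i : 3 ^ i * Qc ^ #|T| * Pn i <= 5 ^ i * Qc ^ #|liftT T i| * Pn 0.
Proof.
elim: i => [|i IH]; first by rewrite !expn0 !mul1n.
have hs := P_step i.
have e2 : Qc ^ #|liftT T i.+1| = Qc ^ #|liftT T i| * Qc ^ #|liftT T i|.
  by rewrite -expnD /= card_prod card_bool; congr (_ ^ _); rewrite muln2 addnn.
rewrite e2 !expnS.
have h1 := leq_mul (leqnn (3 ^ i * Qc ^ #|T|)) hs.
have h2 := leq_mul (leqnn (5 * Qc ^ #|liftT T i|)) IH.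
have E1 : 3 * 3 ^ i * Qc ^ #|T| * Pn i.+1 = 3 ^ i * Qc ^ #|T| * (3 * Pn i.+1) by ring.
have E2 : 3 ^ i * Qc ^ #|T| * (5 * Qc ^ #|liftT T i| * Pn i) =
  5 * Qc ^ #|liftT T i| * (3 ^ i * Qc ^ #|T| * Pn i) by ring.
have E3 : 5 * Qc ^ #|liftT T i| * (5 ^ i * Qc ^ #|liftT T i| * Pn 0) =
  5 * 5 ^ i * (Qc ^ #|liftT T i| * Qc ^ #|liftT T i|) * Pn 0 by ring.
by rewrite E1 (leq_trans h1) // E2 (leq_trans h2) // E3.
Qed.

Variable r : nat.
Let R := r.+1 + r.+1.

Definition badn i := #|[set x | ~~ `[< goodv (Gseq i) x R >]]|.

Lemma bad_P i : R <= #|liftT T i| -> Qc ^ #|liftT T i|.+1 * badn i <= Qc ^ R * Pn i.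
Proof.
move=> hR.
set K := #|liftT T i|.+1.
have h1 : badn i <= \sum_(0 <= m < R.+1) Lm (Gseq i) m.
  rewrite big_mkord; apply: leq_trans (bad_count _ _) _.
  by apply: leq_sum => m _; exact: leq_imset_card.
apply: leq_trans (leq_mul (leqnn _) h1) _.
rewrite big_distrr /= /Pn /Psi /PhiL -/K big_distrr /=.
rewrite [X in _ <= X](big_cat_nat _ (n := R.+1)) //=.
apply: leq_trans (leq_addr _ _); rewrite big_nat_cond [X in _ <= X]big_nat_cond.
apply: leq_sum => m /andP [/andP [_ hm] _].
rewrite mulnA leq_mul2r; apply/orP; right.
have -> : K = m + (K - m) by rewrite /K; lia.
rewrite expnD addKn leq_mul2r; apply/orP; right.
by rewrite leq_pexp2l ?Qc_gt0 //; lia.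
Qed.

Lemma bad_final i : R <= i -> badn i * 3 ^ i <= Qc ^ R * Pn 0 * 5 ^ i.
Proof.
move=> hi.
have hR : R <= #|liftT T i|.
  rewrite card_lift; apply: leq_trans hi _; apply: leq_trans (ltnW (ltn_expl i (ltnSn 1))) _.
  by rewrite leq_pmulr.
have h1 := bad_P hR.
have h2 := P_closed i.
set q := Qc ^ #|liftT T i| in h1 h2.
have hq : 0 < q by rewrite expn_gt0 Qc_gt0.
have hq0 : 0 < Qc ^ #|T| by rewrite expn_gt0 Qc_gt0.
rewrite expnS in h1.
have h3 := leq_mul (leqnn (3 ^ i * Qc ^ #|T|)) h1.
have h4 := leq_mul (leqnn (Qc ^ R)) h2.
have h5 : q * (badn i * 3 ^ i) <= q * (Qc ^ R * Pn 0 * 5 ^ i).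
  have h6 : q * (badn i * 3 ^ i) <= Qc ^ #|T| * Qc * (q * (badn i * 3 ^ i)).
    by apply: leq_pmull; rewrite muln_gt0 hq0 Qc_gt0.
  apply: leq_trans h6 _; nia.
by rewrite leq_pmul2l in h5.
Qed.

Lemma conv_generic (Pp : forall i, pred (liftT T i)) :
  (forall i x, goodv (Gseq i) x R -> Pp i x) ->
  tends_to_one (fun i => proportion (Pp i)).
Proof.
move=> hP eps he.
have hB : forall i, R <= i -> #|[set x | ~~ Pp i x]| * 3 ^ i <= Qc ^ R * Pn 0 * 5 ^ i.
  move=> i hi; apply: leq_trans (bad_final hi); rewrite leq_mul2r; apply/orP; right.
  apply: subset_leq_card; apply/subsetP => x; rewrite !inE; apply: contra => /asboolP.
  exact: hP.
have hn : forall i, 2 ^ i <= #|liftT T i| by move=> i; rewrite card_lift leq_pmulr.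
case: (rat_tail hB hn he) => N hN; exists N => i hi.
rewrite prop_abs; first exact: hN.
by rewrite card_lift muln_gt0 expn_gt0 hT.
Qed.

End Final.

Lemma Gseq_regular (T : finType) (e : rel T) d i :
  regular e d -> regular (Gseq e d (i:=i)) d.
Proof.
move=> hr; elim: i => [|i IH] //= x.
by rewrite (Gseq_deg e d x) IH.
Qed.

Lemma Gseq_bireg (T : finType) (e : rel T) D a b i :
  biregular_bipartite e a b -> biregular_bipartite (Gseq e D (i:=i)) a b.
Proof.
move=> hb; elim: i => [|i [A [h1 [h2 h3]]]] //.
exists [set x : liftT T i.+1 | x.1 \in A]; split; [|split].
- move=> [u x] [w y]; rewrite !inE /= /Hl /= => /andP [h _]; exact: h1.
- move=> x; rewrite inE => hx; rewrite (Gseq_deg e D x); exact: h2.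
- move=> x; rewrite inE => hx; rewrite (Gseq_deg e D x); exact: h3.
Qed.

Theorem corollary4p5 :
  (forall (T : finType) (e : rel T) (d : nat),
     (0 < #|T|)%N -> simple_graph e -> regular e d ->
     exists G : forall i : nat, rel (liftT T i),
       [/\ G 0%N = e,
           (forall i : nat, is_2lift (G i) (G i.+1))
         & BS_conv_Td G d]) /\
  (forall (T : finType) (e : rel T) (a b : nat),
     (0 < #|T|)%N -> simple_graph e -> biregular_bipartite e a b ->
     exists G : forall i : nat, rel (liftT T i),
       [/\ G 0%N = e,
           (forall i : nat, is_2lift (G i) (G i.+1))
         & BS_conv_Tab G a b]).
Proof.
split.
- move=> T e d hT [es ei] hr.
  exists (fun i => Gseq e d (i:=i)); split => //.
  + move=> i; exact: Gseq_lift.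
  + move=> r _.
    have hD : forall x, deg e x <= d by move=> x; rewrite hr.
    apply: (conv_generic hT es ei hD (r := r)) => i x hg; apply/asboolP.
    case: (Gseq_simple es ei d i) => gs gi.
    apply: (iso_of_good gs gi _ hg) => s hs _.
    rewrite (size_ch_deg gs gi hs) (Gseq_regular (i := i) hr) /Td_children.
    by case: s hs => [|k s] _ /=; rewrite ?subn0 ?subn1.
- move=> T e a b hT [es ei] hb.
  exists (fun i => Gseq e (maxn a b) (i:=i)); split => //.
  + move=> i; exact: Gseq_lift.
  + move=> r _.
    have hD : forall x, deg e x <= maxn a b.
      case: hb => A [_ [h2 h3]] x; case: (boolP (x \in A)) => hx.
      * by rewrite h2 // leq_maxl.
      * by rewrite h3 // leq_maxr.
    apply: (conv_generic hT es ei hD (r := r)) => i x hg; apply/asboolP.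
    case: (Gseq_simple es ei (maxn a b) i) => gs gi.
    case: (Gseq_bireg (maxn a b) i hb) => A [h1 [h2 h3]].
    case: (boolP (x \in A)) => hx.
    * left; split; first exact: h2.
      apply: (iso_of_good gs gi _ hg) => s hs _.
      rewrite (size_ch_deg gs gi hs).
      have hp := phi_parity h1 hs; rewrite hx in hp.
      case: s hs hp => [|k s] hs hp /=.
      -- by rewrite h2 // subn0.
      -- rewrite subn1 /Tab_children /=.
         rewrite /= in hp; case: (boolP (odd (size s))) => ho; rewrite ho /= in hp *.
         ++ by rewrite h2 // hp.
         ++ by rewrite h3 // hp.
    * right; split; first exact: h3.
      apply: (iso_of_good gs gi _ hg) => s hs _.
      rewrite (size_ch_deg gs gi hs).
      have hp := phi_parity h1 hs; rewrite (negbTE hx) in hp.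
      case: s hs hp => [|k s] hs hp /=.
      -- by rewrite h3 // subn0.
      -- rewrite subn1 /Tab_children /=.
         rewrite /= in hp; case: (boolP (odd (size s))) => ho; rewrite ho /= in hp *.
         ++ by rewrite h3 // hp.
         ++ by rewrite h2 // hp.
Qed.
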